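(* In an MFQST with degree bound $\phi=3$, every source has degree at most $2$. Moreover, if a source has degree $2$, then it is collinear with its two neighbours.
   Context: Let $Z=\{z_1,\dots,z_n\}\subset\mathbb{R}^2$ ($n\ge 1$) be a set of sources and $z_{BS}\in\mathbb{R}^2\setminus Z$ a sink; each source has supply $1$. A flow-dependent quadratic Steiner tree (FQST) consists of a finite set $S\subset\mathbb{R}^2$ of Steiner points and a tree $T$ with vertex set $Z\cup S\cup\{z_{BS}\}$ whose edges are directed towards $z_{BS}$. Every node other than the sink has exactly one out-edge, and the sink has none. Each edge $e$ carries a positive flow $f(e)$ such that: - at each source, the flow on its out-edge minus the total flow on its in-edges equals $1$; - at each Steiner point, the out-flow equals the total in-flow; - the sink receives total flow $n$. The cost is $L(T)=\sum_{e\in E(T)} f(e)|e|^2$. An MFQST with degree bound $\phi$ is an FQST minimising $L$ among all FQSTs (any finite $S$, any topology) in which every Steiner point has degree at least $\phi$. *)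

(* Defs.v *)
From Stdlib Require Import Reals Lra Lia Arith.
Open Scope R_scope.

Definition point := (R * R)%type.

Definition dist2 (p q : point) : R :=
  (fst p - fst q) ^ 2 + (snd p - snd q) ^ 2.

Definition pt_collinear (p q r : point) : Prop :=
  (fst q - fst p) * (snd r - snd p) - (snd q - snd p) * (fst r - fst p) = 0.

Fixpoint sumR (N : nat) (g : nat -> R) : R :=
  match N with
  | O => 0
  | S k => sumR k g + g k
  end.

Fixpoint cntN (N : nat) (p : nat -> bool) : nat :=
  match N with
  | O => O
  | S k => (cntN k p + (if p k then 1 else 0))%nat
  end.

(* Node numbering: nodes 0..n-1 are the sources (node k at z k),
   nodes n..n+m-1 are the Steiner points (node n+i at spt i),
   node n+m is the sink.  Every non-sink node k < n+m has the unique
   out-edge (k, par k), carrying flow [flow k]. *)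
Record FQST := mkFQST {
  nst : nat;
  spt : nat -> point;
  par : nat -> nat;
  flow : nat -> R
}.

Section FQSTDefs.
Variables (n : nat) (z : nat -> point) (zBS : point).

Definition sink (T : FQST) : nat := (n + nst T)%nat.

Definition node_pos (T : FQST) (k : nat) : point :=
  if Nat.ltb k n then z k
  else if Nat.ltb k (n + nst T) then spt T (k - n) else zBS.

Definition inflow (T : FQST) (k : nat) : R :=
  sumR (n + nst T) (fun j => if Nat.eqb (par T j) k then flow T j else 0).

Definition deg (T : FQST) (k : nat) : nat :=
  ((if Nat.ltb k (n + nst T) then 1 else 0) +
   cntN (n + nst T) (fun j => Nat.eqb (par T j) k))%nat.

Definition adjacent (T : FQST) (k a : nat) : Prop :=
  ((k < n + nst T)%nat /\ a = par T k) \/ ((a < n + nst T)%nat /\ par T a = k).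

Definition is_FQST (T : FQST) : Prop :=
  (forall k, (k < n + nst T)%nat -> (par T k <= n + nst T)%nat /\ par T k <> k) /\
  (* tree directed towards the sink: every node reaches the sink *)
  (forall k, (k < n + nst T)%nat -> exists t, Nat.iter t (par T) k = sink T) /\
  (* vertex set Z ∪ S ∪ {zBS}: Steiner points are new, distinct points *)
  (forall i j, (i < nst T)%nat -> (j < nst T)%nat -> i <> j -> spt T i <> spt T j) /\
  (forall i k, (i < nst T)%nat -> (k < n)%nat -> spt T i <> z k) /\
  (forall i, (i < nst T)%nat -> spt T i <> zBS) /\
  (forall k, (k < n + nst T)%nat -> 0 < flow T k) /\
  (* conservation at sources (supply 1) *)
  (forall k, (k < n)%nat -> flow T k - inflow T k = 1) /\
  (forall k, (n <= k < n + nst T)%nat -> flow T k = inflow T k) /\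
  inflow T (sink T) = INR n.

Definition cost (T : FQST) : R :=
  sumR (n + nst T) (fun k => flow T k * dist2 (node_pos T k) (node_pos T (par T k))).

Definition steiner_deg_ok (phi : nat) (T : FQST) : Prop :=
  forall k, (n <= k < n + nst T)%nat -> (phi <= deg T k)%nat.

Definition is_MFQST (phi : nat) (T : FQST) : Prop :=
  is_FQST T /\ steiner_deg_ok phi T /\
  forall T', is_FQST T' -> steiner_deg_ok phi T' -> cost T <= cost T'.

End FQSTDefs.

(* Main.v *)
Require Import Defs.
From Stdlib Require Import Reals Lra Lia Arith List Classical.
Open Scope R_scope.

Lemma sumR_ext N f g : (forall i, (i < N)%nat -> f i = g i) -> sumR N f = sumR N g.
Proof. induction N; intros H; simpl; auto. rewrite IHN by (intros; apply H; lia). rewrite (H N) by lia. auto. Qed.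

Lemma sumR_plus N f g : sumR N (fun i => f i + g i) = sumR N f + sumR N g.
Proof. induction N; simpl; [lra|]. rewrite IHN. lra. Qed.

Lemma sumR_minus N f g : sumR N (fun i => f i - g i) = sumR N f - sumR N g.
Proof. induction N; simpl; [lra|]. rewrite IHN. lra. Qed.

Lemma sumR_scal N c f : sumR N (fun i => c * f i) = c * sumR N f.
Proof. induction N; simpl; [lra|]. rewrite IHN. lra. Qed.

Lemma sumR_zero N f : (forall i, (i < N)%nat -> f i = 0) -> sumR N f = 0.
Proof. induction N; intros H; simpl; auto. rewrite IHN by (intros; apply H; lia). rewrite (H N) by lia. lra. Qed.

Lemma sumR_delta N a g : (a < N)%nat -> sumR N (fun i => if Nat.eqb i a then g i else 0) = g a.
Proof.
  induction N; intros Ha; [lia|]. simpl.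
  destruct (Nat.eqb_spec N a).
  - subst. rewrite sumR_zero. lra. intros i Hi. destruct (Nat.eqb_spec i a); [lia|auto].
  - rewrite IHN by lia. lra.
Qed.

Lemma sumR_delta2 N a b g : (a < N)%nat -> (b < N)%nat -> a <> b ->
  sumR N (fun i => if orb (Nat.eqb i a) (Nat.eqb i b) then g i else 0) = g a + g b.
Proof.
  intros Ha Hb Hab.
  rewrite (sumR_ext N _ (fun i => (if Nat.eqb i a then g i else 0) + (if Nat.eqb i b then g i else 0))).
  - rewrite sumR_plus, !sumR_delta; auto.
  - intros i _. destruct (Nat.eqb_spec i a), (Nat.eqb_spec i b); simpl; subst; try lia; lra.
Qed.

Lemma sumR_le N f g : (forall i, (i < N)%nat -> f i <= g i) -> sumR N f <= sumR N g.
Proof. induction N; intros H; simpl; [lra|]. assert (H1 := H N (Nat.lt_succ_diag_r N)).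
  assert (sumR N f <= sumR N g) by (apply IHN; intros; apply H; lia). lra. Qed.

Lemma sumR_nonneg N f : (forall i, (i < N)%nat -> 0 <= f i) -> 0 <= sumR N f.
Proof. intros H. rewrite <- (sumR_zero N (fun _ => 0)) by auto. apply sumR_le. auto. Qed.

Lemma sumR_ge_term N f c : (forall i, (i < N)%nat -> 0 <= f i) -> (c < N)%nat -> f c <= sumR N f.
Proof.
  intros H Hc. rewrite <- (sumR_delta N c f Hc). apply sumR_le. intros i Hi.
  destruct (Nat.eqb_spec i c); [lra| apply H; auto].
Qed.

Lemma cnt_sumR N p : INR (cntN N p) = sumR N (fun i => if p i then 1 else 0).
Proof. induction N; simpl; auto. rewrite plus_INR, IHN. destruct (p N); simpl; lra. Qed.

Lemma cnt_one N p : (1 <= cntN N p)%nat -> exists a, (a < N)%nat /\ p a = true.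
Proof.
  induction N; simpl; intros H; [lia|].
  destruct (p N) eqn:E.
  - exists N; split; auto.
  - destruct IHN as [a [Ha Hp]]; [lia|]. exists a; split; auto.
Qed.

Lemma cnt_two N p : (2 <= cntN N p)%nat ->
  exists a b, (a < N)%nat /\ (b < N)%nat /\ a <> b /\ p a = true /\ p b = true.
Proof.
  induction N; simpl; intros H; [lia|].
  destruct (p N) eqn:E.
  - destruct (cnt_one N p) as [a [Ha Hp]]; [lia|]. exists a, N; repeat split; auto; lia.
  - destruct IHN as [a [b [? [? [? [? ?]]]]]]; [lia|]. exists a, b; repeat split; auto; lia.
Qed.

Lemma cnt_ge2 N p a b : (a < N)%nat -> (b < N)%nat -> a <> b -> p a = true -> p b = true ->
  (2 <= cntN N p)%nat.
Proof.
  intros Ha Hb Hab Pa Pb. apply INR_le. rewrite cnt_sumR. simpl INR.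
  replace (1 + 1) with (sumR N (fun i => if orb (Nat.eqb i a) (Nat.eqb i b) then 1 else 0)).
  - apply sumR_le. intros i Hi. destruct (Nat.eqb_spec i a), (Nat.eqb_spec i b); subst; simpl;
      try rewrite Pa; try rewrite Pb; try lra. destruct (p i); lra.
  - rewrite sumR_delta2; auto.
Qed.

Lemma avoid (K G : point) (L : list point) : (fst G <> 0 \/ snd G <> 0) ->
  forall eps, 0 < eps -> exists t, 0 < t < eps /\
   forall q, In q L -> (fst K - t * fst G, snd K - t * snd G) <> q.
Proof.
  intros HG. induction L as [|q L IH]; intros eps He.
  - exists (eps/2). split; [lra|]. intros q [].
  - destruct (IH eps He) as [t1 [Ht1 H1]].
    destruct (classic ((fst K - t1 * fst G, snd K - t1 * snd G) = q)) as [Eq|Ne].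
    + destruct (IH t1 (proj1 Ht1)) as [t2 [Ht2 H2]].
      exists t2. split; [lra|]. intros q' [<-|Hq'].
      * intro E. rewrite <- Eq in E. injection E as E1 E2.
        destruct HG as [HG|HG].
        -- apply HG. apply (Rmult_eq_reg_l (t1 - t2)); [|lra]. nra.
        -- apply HG. apply (Rmult_eq_reg_l (t1 - t2)); [|lra]. nra.
      * apply H2; auto.
    + exists t1. split; [lra|]. intros q' [<-|Hq']; auto.
Qed.

Section Constr.
Variables (n : nat) (z : nat -> point) (zBS : point) (T : FQST).
Hypothesis HT : is_FQST n z zBS T.
Hypothesis Hdeg : steiner_deg_ok n 3 T.
Variable k : nat.
Hypothesis Hk : (k < n)%nat.
Variable inC : nat -> bool.
Hypothesis HC : forall i, inC i = true -> (i < n + nst T)%nat /\ par T i = k.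
Variable c0 : nat.
Hypothesis Hc0 : inC c0 = true.

Local Notation N := (n + nst T)%nat.

Lemma HTpar i : (i < N)%nat -> (par T i <= N)%nat /\ par T i <> i.
Proof. destruct HT as [H _]. auto. Qed.
Lemma HTreach i : (i < N)%nat -> exists t, Nat.iter t (par T) i = N.
Proof. destruct HT as [_ [H _]]. apply H. Qed.
Lemma HTflow i : (i < N)%nat -> 0 < flow T i.
Proof. destruct HT as [_ [_ [_ [_ [_ [H _]]]]]]. auto. Qed.
Lemma HTsrc i : (i < n)%nat -> flow T i - inflow n T i = 1.
Proof. destruct HT as [_ [_ [_ [_ [_ [_ [H _]]]]]]]. auto. Qed.
Lemma HTst i : (n <= i < N)%nat -> flow T i = inflow n T i.
Proof. destruct HT as [_ [_ [_ [_ [_ [_ [_ [H _]]]]]]]]. auto. Qed.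
Lemma HTsink : inflow n T N = INR n.
Proof. destruct HT as [_ [_ [_ [_ [_ [_ [_ [_ H]]]]]]]]. auto. Qed.

Definition rr (y : nat) : nat := if Nat.eqb y N then S N else y.

Definition SC : R := sumR N (fun i => if inC i then flow T i else 0).

Definition mk (s : point) : FQST := mkFQST (S (nst T))
  (fun i => if Nat.ltb i (nst T) then spt T i else s)
  (fun i => if Nat.ltb i N then (if orb (inC i) (Nat.eqb i k) then N else rr (par T i))
            else rr (par T k))
  (fun i => if Nat.ltb i N then (if Nat.eqb i k then flow T k - SC else flow T i)
            else flow T k).

Lemma NS s : (n + nst (mk s) = S N)%nat.
Proof. simpl. lia. Qed.

Lemma kN : (k < N)%nat.
Proof. lia. Qed.

Lemma inCk : inC k = false.
Proof. destruct (inC k) eqn:E; auto. destruct (HC k E). destruct (HTpar k kN). congruence. Qed.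

Lemma par'_lt s i : (i < N)%nat ->
  par (mk s) i = if orb (inC i) (Nat.eqb i k) then N else rr (par T i).
Proof. intros H. simpl. destruct (Nat.ltb_spec i N); [auto|lia]. Qed.

Lemma par'_N s : par (mk s) N = rr (par T k).
Proof. simpl. destruct (Nat.ltb_spec N N); [lia|auto]. Qed.

Lemma flow'_lt s i : (i < N)%nat ->
  flow (mk s) i = if Nat.eqb i k then flow T k - SC else flow T i.
Proof. intros H. simpl. destruct (Nat.ltb_spec i N); [auto|lia]. Qed.

Lemma flow'_N s : flow (mk s) N = flow T k.
Proof. simpl. destruct (Nat.ltb_spec N N); [lia|auto]. Qed.

Lemma rr_neq y : (y <= N)%nat -> rr y <> N.
Proof. unfold rr. destruct (Nat.eqb_spec y N); lia. Qed.

Lemma rr_lt y : (y < N)%nat -> rr y = y.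
Proof. unfold rr. destruct (Nat.eqb_spec y N); lia. Qed.

Lemma rr_eqb x y : (x <= N)%nat -> (y <= N)%nat -> Nat.eqb (rr x) (rr y) = Nat.eqb x y.
Proof. intros Hx Hy. destruct (Nat.eqb_spec x y) as [e|e].
  - subst. apply Nat.eqb_refl.
  - apply Nat.eqb_neq. unfold rr. destruct (Nat.eqb_spec x N), (Nat.eqb_spec y N); lia. Qed.

Lemma L1 s (w : nat -> R) y : (y <= N)%nat ->
  sumR N (fun i => if Nat.eqb (par (mk s) i) (rr y) then w i else 0)
  = sumR N (fun i => if Nat.eqb (par T i) y then w i else 0)
    - (if Nat.eqb y k then sumR N (fun i => if inC i then w i else 0) else 0)
    - (if Nat.eqb (par T k) y then w k else 0).
Proof.
  intros Hy.
  assert (E1 : (if Nat.eqb y k then sumR N (fun i => if inC i then w i else 0) else 0)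
    = sumR N (fun i => if andb (inC i) (Nat.eqb y k) then w i else 0)).
  { destruct (Nat.eqb y k).
    - apply sumR_ext. intros. destruct (inC i); auto.
    - symmetry. apply sumR_zero. intros. destruct (inC i); auto. }
  assert (E2 : (if Nat.eqb (par T k) y then w k else 0)
    = sumR N (fun i => if Nat.eqb i k then (if Nat.eqb (par T k) y then w k else 0) else 0)).
  { rewrite sumR_delta; auto. apply kN. }
  rewrite E1, E2, <- !sumR_minus. apply sumR_ext. intros i Hi.
  rewrite par'_lt by auto.
  destruct (HTpar i Hi) as [Hp1 Hp2]. destruct (HTpar k kN) as [Hk1 Hk2].
  destruct (inC i) eqn:Ei.
  - destruct (HC i Ei) as [_ Hpi]. simpl.
    rewrite (Nat.eqb_sym N (rr y)), (proj2 (Nat.eqb_neq _ _) (rr_neq y Hy)).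
    destruct (Nat.eqb_spec i k); [subst; congruence|].
    rewrite Hpi. destruct (Nat.eqb_spec k y), (Nat.eqb_spec y k); try lia; lra.
  - simpl. destruct (Nat.eqb_spec i k).
    + subst. rewrite (Nat.eqb_sym N (rr y)), (proj2 (Nat.eqb_neq _ _) (rr_neq y Hy)).
      destruct (Nat.eqb (par T k) y); lra.
    + rewrite rr_eqb by auto. lra.
Qed.

Lemma L2 s (w : nat -> R) :
  sumR N (fun i => if Nat.eqb (par (mk s) i) N then w i else 0)
  = sumR N (fun i => if inC i then w i else 0) + w k.
Proof.
  rewrite <- (sumR_delta N k w kN). rewrite <- sumR_plus. apply sumR_ext. intros i Hi.
  rewrite par'_lt by auto. destruct (HTpar i Hi) as [Hp1 Hp2].
  destruct (inC i) eqn:Ei.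
  - destruct (HC i Ei) as [_ Hpi]. simpl. rewrite Nat.eqb_refl.
    destruct (Nat.eqb_spec i k); [subst; congruence|]. lra.
  - simpl. destruct (Nat.eqb_spec i k).
    + rewrite Nat.eqb_refl. lra.
    + rewrite (proj2 (Nat.eqb_neq _ _) (rr_neq _ Hp1)). lra.
Qed.

Lemma inflow'_rr s y : (y <= N)%nat ->
  inflow n (mk s) (rr y) = inflow n T y - (if Nat.eqb y k then SC else 0).
Proof.
  intros Hy. unfold inflow. rewrite NS. cbn [sumR].
  rewrite (sumR_ext N _ (fun i => if Nat.eqb (par (mk s) i) (rr y) then flow T i else 0)).
  - rewrite L1 by auto. rewrite par'_N, flow'_N. destruct (HTpar k kN) as [Hk1 Hk2].
    rewrite rr_eqb by auto. unfold SC. destruct (Nat.eqb (par T k) y); lra.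
  - intros i Hi. rewrite flow'_lt by auto. destruct (Nat.eqb_spec i k); auto.
    subst. rewrite par'_lt by auto. rewrite Nat.eqb_refl, Bool.orb_true_r.
    rewrite (Nat.eqb_sym N (rr y)), (proj2 (Nat.eqb_neq _ _) (rr_neq y Hy)). auto.
Qed.

Lemma inflow'_N s : inflow n (mk s) N = flow T k.
Proof.
  unfold inflow. rewrite NS. cbn [sumR]. rewrite L2, par'_N.
  destruct (HTpar k kN) as [Hk1 Hk2].
  rewrite (proj2 (Nat.eqb_neq _ _) (rr_neq _ Hk1)).
  rewrite flow'_lt by apply kN. rewrite Nat.eqb_refl.
  rewrite (sumR_ext N _ (fun i => if inC i then flow T i else 0)).
  - unfold SC. lra.
  - intros i Hi. rewrite flow'_lt by auto. destruct (inC i) eqn:Ei; auto.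
    destruct (Nat.eqb_spec i k); auto. subst. rewrite inCk in Ei. discriminate.
Qed.

Lemma pos'_lt s i : (i < N)%nat -> node_pos n z zBS (mk s) i = node_pos n z zBS T i.
Proof.
  intros H. unfold node_pos. rewrite NS. destruct (Nat.ltb_spec i n); auto.
  destruct (Nat.ltb_spec i (S N)), (Nat.ltb_spec i N); try lia. simpl.
  destruct (Nat.ltb_spec (i - n) (nst T)); auto; lia.
Qed.

Lemma pos'_N s : node_pos n z zBS (mk s) N = s.
Proof.
  unfold node_pos. rewrite NS. destruct (Nat.ltb_spec N n); [lia|].
  destruct (Nat.ltb_spec N (S N)); [|lia]. simpl.
  destruct (Nat.ltb_spec (N - n) (nst T)); auto; lia.
Qed.

Lemma pos'_rr s y : (y <= N)%nat -> node_pos n z zBS (mk s) (rr y) = node_pos n z zBS T y.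
Proof.
  intros Hy. unfold rr. destruct (Nat.eqb_spec y N).
  - subst. unfold node_pos. rewrite NS.
    destruct (Nat.ltb_spec (S N) n); [lia|]. destruct (Nat.ltb_spec (S N) (S N)); [lia|].
    destruct (Nat.ltb_spec N n); [lia|]. destruct (Nat.ltb_spec N N); [lia|]. auto.
  - apply pos'_lt. lia.
Qed.

Lemma deg'_ok s : steiner_deg_ok n 3 (mk s).
Proof.
  intros x Hx. rewrite NS in Hx. unfold deg. rewrite NS.
  destruct (Nat.ltb_spec x (S N)); [|lia].
  destruct (Nat.eq_dec x N).
  - subst x. assert (2 <= cntN (S N) (fun j => Nat.eqb (par (mk s) j) N))%nat; [|lia].
    apply INR_le. rewrite cnt_sumR. cbn [sumR]. rewrite L2, par'_N.
    destruct (HTpar k kN) as [Hk1 Hk2].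
    rewrite (proj2 (Nat.eqb_neq _ _) (rr_neq _ Hk1)).
    assert (1 <= sumR N (fun i => if inC i then 1 else 0)).
    { destruct (HC c0 Hc0) as [Hc _].
      replace 1 with ((fun i => if inC i then 1 else 0) c0) at 1 by (simpl; rewrite Hc0; auto).
      apply (sumR_ge_term N (fun i => if inC i then 1 else 0) c0); auto. intros. destruct (inC i); lra. }
    simpl. lra.
  - assert (Hx' : (n <= x < N)%nat) by lia.
    assert (Hd := Hdeg x Hx'). unfold deg in Hd.
    destruct (Nat.ltb_spec x N); [|lia].
    replace (fun j => Nat.eqb (par (mk s) j) x) with (fun j => Nat.eqb (par (mk s) j) (rr x))
      by (rewrite rr_lt; auto).
    assert (cntN (S N) (fun j => Nat.eqb (par (mk s) j) (rr x)) = cntN N (fun j => Nat.eqb (par T j) x)); [|lia].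
    apply INR_eq. rewrite !cnt_sumR. cbn [sumR]. rewrite L1 by lia. rewrite par'_N.
    destruct (HTpar k kN) as [Hk1 Hk2]. rewrite rr_eqb by lia.
    destruct (Nat.eqb_spec x k); [lia|]. destruct (Nat.eqb (par T k) x); lra.
Qed.

Lemma SC_le : SC <= inflow n T k.
Proof.
  unfold SC, inflow. apply sumR_le. intros i Hi.
  destruct (inC i) eqn:Ei.
  - destruct (HC i Ei) as [_ Hp]. rewrite Hp, Nat.eqb_refl. lra.
  - destruct (Nat.eqb (par T i) k); [|lra]. left; apply HTflow; auto.
Qed.

Lemma reach_step s x y : (exists t, Nat.iter t (par (mk s)) y = S N) ->
  par (mk s) x = y -> exists t, Nat.iter t (par (mk s)) x = S N.
Proof. intros [t Ht] E. exists (S t). rewrite Nat.iter_succ_r, E. auto. Qed.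

Lemma reach_back s x : (exists t, Nat.iter t (par (mk s)) x = S N) -> x <> S N ->
  exists t, Nat.iter t (par (mk s)) (par (mk s) x) = S N.
Proof. intros [t Ht] E. destruct t; simpl in Ht; [congruence|]. exists t.
  rewrite <- Nat.iter_succ_r. auto. Qed.

Lemma reach_main s : forall t j, (j <= N)%nat -> Nat.iter t (par T) j = N ->
  exists t', Nat.iter t' (par (mk s)) (rr j) = S N.
Proof.
  induction t; intros j Hj Ht.
  - simpl in Ht. subst. exists O. unfold rr. rewrite Nat.eqb_refl. auto.
  - destruct (Nat.eq_dec j N).
    + subst. exists O. unfold rr. rewrite Nat.eqb_refl. auto.
    + assert (Hj' : (j < N)%nat) by lia. rewrite Nat.iter_succ_r in Ht.
      destruct (HTpar j Hj') as [Hp1 Hp2].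
      specialize (IHt (par T j) Hp1 Ht).
      rewrite (rr_lt j Hj').
      destruct (inC j) eqn:Ei.
      * destruct (HC j Ei) as [_ Hpj]. rewrite Hpj, (rr_lt k kN) in IHt.
        assert (HN := reach_back s k IHt ltac:(lia)).
        rewrite par'_lt, Nat.eqb_refl, Bool.orb_true_r in HN by apply kN.
        apply (reach_step s j N HN). rewrite par'_lt by auto. rewrite Ei. auto.
      * destruct (Nat.eqb_spec j k).
        -- subst j. assert (HN : exists t, Nat.iter t (par (mk s)) N = S N).
           { apply (reach_step s N _ IHt). apply par'_N. }
           apply (reach_step s k N HN). rewrite par'_lt by auto. rewrite Nat.eqb_refl, Bool.orb_true_r. auto.
        -- apply (reach_step s j _ IHt). rewrite par'_lt by auto. rewrite Ei.
           destruct (Nat.eqb_spec j k); [lia|]. auto.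
Qed.

Lemma mk_FQST s : (forall i, (i < nst T)%nat -> s <> spt T i) -> (forall i, (i < n)%nat -> s <> z i) ->
  s <> zBS -> is_FQST n z zBS (mk s).
Proof.
  intros Hs1 Hs2 Hs3.
  destruct HT as [_ [_ [H3 [H4 [H5 _]]]]].
  unfold is_FQST. rewrite !NS. unfold sink. rewrite NS.
  split; [|split; [|split; [|split; [|split; [|split; [|split; [|split]]]]]]].
  - intros i Hi. destruct (Nat.eq_dec i N).
    + subst. rewrite par'_N. destruct (HTpar k kN) as [Hk1 Hk2]. unfold rr.
      destruct (Nat.eqb_spec (par T k) N); lia.
    + rewrite par'_lt by lia. destruct (HTpar i ltac:(lia)) as [Hp1 Hp2].
      destruct (orb (inC i) (Nat.eqb i k)); [lia|]. unfold rr. destruct (Nat.eqb_spec (par T i) N); lia.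
  - intros i Hi. destruct (Nat.eq_dec i N).
    + subst. destruct (HTreach k kN) as [t Ht].
      assert (HR := reach_main s t k ltac:(lia) Ht). rewrite (rr_lt k kN) in HR.
      assert (HN := reach_back s k HR ltac:(lia)).
      rewrite par'_lt, Nat.eqb_refl, Bool.orb_true_r in HN by apply kN. auto.
    + destruct (HTreach i ltac:(lia)) as [t Ht].
      assert (HR := reach_main s t i ltac:(lia) Ht). rewrite (rr_lt i ltac:(lia)) in HR. auto.
  - intros i j Hi Hj Hij. simpl in Hi, Hj |- *.
    destruct (Nat.ltb_spec i (nst T)), (Nat.ltb_spec j (nst T)); try (exfalso; lia).
    + apply H3; auto.
    + intro E. apply (Hs1 i); auto.
    + intro E. apply (Hs1 j); auto.
  - intros i j Hi Hj. simpl. destruct (Nat.ltb_spec i (nst T)); auto.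
  - intros i Hi. simpl. destruct (Nat.ltb_spec i (nst T)); auto.
  - intros i Hi. destruct (Nat.eq_dec i N).
    + subst. rewrite flow'_N. apply HTflow, kN.
    + rewrite flow'_lt by lia. destruct (Nat.eqb_spec i k).
      * subst. assert (H := HTsrc k Hk). assert (H' := SC_le). lra.
      * apply HTflow. lia.
  - intros i Hi. rewrite flow'_lt by lia.
    replace (inflow n (mk s) i) with (inflow n (mk s) (rr i)) by (rewrite rr_lt; auto; lia).
    rewrite inflow'_rr by lia. assert (H := HTsrc i Hi).
    destruct (Nat.eqb_spec i k); [subst|]; lra.
  - intros i Hi. destruct (Nat.eq_dec i N).
    + subst. rewrite flow'_N, inflow'_N. auto.
    + rewrite flow'_lt by lia.
      replace (inflow n (mk s) i) with (inflow n (mk s) (rr i)) by (rewrite rr_lt; auto; lia).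
      rewrite inflow'_rr by lia. assert (H := HTst i ltac:(lia)).
      destruct (Nat.eqb_spec i k); [lia|]. lra.
  - replace (S N) with (rr N) by (unfold rr; rewrite Nat.eqb_refl; auto).
    rewrite inflow'_rr by lia. destruct (Nat.eqb_spec N k); [lia|].
    assert (H := HTsink). lra.
Qed.

Lemma cost'_eq s : cost n z zBS (mk s) = cost n z zBS T +
  (sumR N (fun i => if inC i then flow T i * (dist2 (node_pos n z zBS T i) s
        - dist2 (node_pos n z zBS T i) (node_pos n z zBS T k)) else 0)
   + (flow T k - SC) * dist2 (node_pos n z zBS T k) s
   + flow T k * dist2 s (node_pos n z zBS T (par T k))
   - flow T k * dist2 (node_pos n z zBS T k) (node_pos n z zBS T (par T k))).
Proof.
  unfold cost at 1. rewrite NS. cbn [sumR].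
  destruct (HTpar k kN) as [Hk1 Hk2].
  rewrite flow'_N, pos'_N, par'_N, pos'_rr by auto.
  rewrite (sumR_ext N _ (fun i =>
     (flow T i * dist2 (node_pos n z zBS T i) (node_pos n z zBS T (par T i)))
     + (if inC i then flow T i * (dist2 (node_pos n z zBS T i) s
        - dist2 (node_pos n z zBS T i) (node_pos n z zBS T k)) else 0)
     + (if Nat.eqb i k then ((flow T k - SC) * dist2 (node_pos n z zBS T k) s
         - flow T k * dist2 (node_pos n z zBS T k) (node_pos n z zBS T (par T k))) else 0))).
  - rewrite !sumR_plus, sumR_delta by apply kN. unfold cost. ring.
  - intros i Hi. rewrite flow'_lt, par'_lt, pos'_lt by auto.
    destruct (HTpar i Hi) as [Hp1 Hp2].
    destruct (inC i) eqn:Ei.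
    + destruct (HC i Ei) as [_ Hpi]. simpl. rewrite pos'_N, Hpi.
      destruct (Nat.eqb_spec i k); [subst; congruence|]. ring.
    + simpl. destruct (Nat.eqb_spec i k).
      * subst. rewrite pos'_N. ring.
      * rewrite pos'_rr by auto. ring.
Qed.

Lemma key (Hmin : forall T', is_FQST n z zBS T' -> steiner_deg_ok n 3 T' ->
     cost n z zBS T <= cost n z zBS T') :
  sumR N (fun i => if inC i then flow T i * (fst (node_pos n z zBS T k) - fst (node_pos n z zBS T i)) else 0)
    + flow T k * (fst (node_pos n z zBS T k) - fst (node_pos n z zBS T (par T k))) = 0 /\
  sumR N (fun i => if inC i then flow T i * (snd (node_pos n z zBS T k) - snd (node_pos n z zBS T i)) else 0)
    + flow T k * (snd (node_pos n z zBS T k) - snd (node_pos n z zBS T (par T k))) = 0.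
Proof.
  set (K := node_pos n z zBS T k). set (P := node_pos n z zBS T (par T k)).
  set (pos := node_pos n z zBS T).
  set (Sx := sumR N (fun i => if inC i then flow T i * (fst K - fst (pos i)) else 0)).
  set (Sy := sumR N (fun i => if inC i then flow T i * (snd K - snd (pos i)) else 0)).
  set (F := flow T k).
  set (Gx := Sx + F * (fst K - fst P)). set (Gy := Sy + F * (snd K - snd P)).
  destruct (classic (Gx = 0 /\ Gy = 0)) as [H|H]; [exact H|]. exfalso.
  assert (HG : fst (Gx, Gy) <> 0 \/ snd (Gx, Gy) <> 0).
  { simpl. destruct (Req_dec Gx 0); [right; intro; apply H; auto | left; auto]. }
  assert (HF : 0 < F) by (apply HTflow; apply kN).
  destruct (avoid K (Gx, Gy) (map z (seq 0 n) ++ map (spt T) (seq 0 (nst T)) ++ zBS :: nil)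
     HG (/ F) (Rinv_0_lt_compat _ HF)) as [t [Ht Hav]].
  set (s := (fst K - t * fst (Gx, Gy), snd K - t * snd (Gx, Gy))).
  assert (FQ : is_FQST n z zBS (mk s)).
  { apply mk_FQST.
    - intros i Hi. apply Hav. apply in_or_app; right; apply in_or_app; left; apply in_map; apply in_seq; lia.
    - intros i Hi. apply Hav. apply in_or_app; left; apply in_map; apply in_seq; lia.
    - apply Hav. apply in_or_app; right; apply in_or_app; right; left; auto. }
  assert (Hc := Hmin (mk s) FQ (deg'_ok s)). rewrite cost'_eq in Hc.
  rewrite (sumR_ext N _ (fun i => (-2 * t * Gx) * (if inC i then flow T i * (fst K - fst (pos i)) else 0)
     + (-2 * t * Gy) * (if inC i then flow T i * (snd K - snd (pos i)) else 0)
     + (t * t * (Gx * Gx + Gy * Gy)) * (if inC i then flow T i else 0))) in Hc.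
  2: { intros i Hi. destruct (inC i); [|ring]. unfold s, dist2, pos, K. simpl. ring. }
  rewrite !sumR_plus, !sumR_scal in Hc. fold Sx Sy in Hc. fold SC in Hc.
  assert (E : (-2 * t * Gx * Sx + -2 * t * Gy * Sy + t * t * (Gx * Gx + Gy * Gy) * SC +
      (flow T k - SC) * dist2 (node_pos n z zBS T k) s + flow T k * dist2 s (node_pos n z zBS T (par T k)) -
      flow T k * dist2 (node_pos n z zBS T k) (node_pos n z zBS T (par T k)))
      = 2 * t * (Gx * Gx + Gy * Gy) * (t * F - 1)).
  { fold K P F. unfold s, dist2, Gx, Gy. simpl. ring. }
  rewrite E in Hc.
  assert (HG2 : 0 < Gx * Gx + Gy * Gy).
  { destruct HG as [HG|HG]; simpl in HG.
    - assert (0 < Gx * Gx) by (apply Rsqr_pos_lt; auto). assert (0 <= Gy * Gy) by apply Rle_0_sqr. lra.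
    - assert (0 < Gy * Gy) by (apply Rsqr_pos_lt; auto). assert (0 <= Gx * Gx) by apply Rle_0_sqr. lra. }
  assert (HtF : t * F < 1).
  { replace 1 with (/ F * F) by (field; lra). apply Rmult_lt_compat_r; lra. }
  assert (0 < 2 * t * (Gx * Gx + Gy * Gy)) by (apply Rmult_lt_0_compat; lra).
  assert (2 * t * (Gx * Gx + Gy * Gy) * (t * F - 1) < 0).
  { apply Rmult_lt_reg_l with (r := 1); [lra|]. rewrite Rmult_0_r.
    rewrite Rmult_1_l. apply Rmult_lt_reg_r with (r := 1); [lra|].
    rewrite Rmult_0_l, Rmult_1_r. 
    assert (0 < 2 * t * (Gx * Gx + Gy * Gy) * (1 - t * F)) by (apply Rmult_lt_0_compat; lra). lra. }
  lra.
Qed.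

End Constr.

Lemma pos_src n z zBS T k : (k < n)%nat -> node_pos n z zBS T k = z k.
Proof. intros. unfold node_pos. destruct (Nat.ltb_spec k n); [auto|lia]. Qed.

Lemma pos_distinct n z zBS T k j
  (Hz : forall i j, (i < n)%nat -> (j < n)%nat -> i <> j -> z i <> z j)
  (HBS : forall i, (i < n)%nat -> z i <> zBS)
  (HT : is_FQST n z zBS T) : (k < n)%nat -> (j <= n + nst T)%nat -> j <> k ->
  node_pos n z zBS T j <> z k.
Proof.
  intros Hk Hj Hjk. destruct HT as [_ [_ [_ [H4 [H5 _]]]]].
  unfold node_pos. destruct (Nat.ltb_spec j n).
  - apply Hz; auto.
  - destruct (Nat.ltb_spec j (n + nst T)).
    + apply H4; lia.
    + intro E. apply (HBS k Hk). auto.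
Qed.

Lemma collin_aux f F kx ky bx by0 px py : 0 < f ->
  f * (kx - bx) + F * (kx - px) = 0 -> f * (ky - by0) + F * (ky - py) = 0 ->
  (px - kx) * (by0 - ky) - (py - ky) * (bx - kx) = 0.
Proof.
  intros Hf E1 E2.
  assert (f * ((px - kx) * (by0 - ky) - (py - ky) * (bx - kx)) = 0).
  { replace (f * ((px - kx) * (by0 - ky) - (py - ky) * (bx - kx))) with
      ((px - kx) * (f * (by0 - ky)) - (py - ky) * (f * (bx - kx))) by ring.
    replace (f * (by0 - ky)) with (F * (ky - py)) by lra.
    replace (f * (bx - kx)) with (F * (kx - px)) by lra. ring. }
  destruct (Rmult_integral _ _ H); lra.
Qed.

Theorem mainTheorem10 (n : nat) (z : nat -> point) (zBS : point)
  (Hn : (1 <= n)%nat)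
  (Hz : forall i j, (i < n)%nat -> (j < n)%nat -> i <> j -> z i <> z j)
  (HBS : forall i, (i < n)%nat -> z i <> zBS)
  (T : FQST) (HT : is_MFQST n z zBS 3 T) :
  forall k, (k < n)%nat ->
    (deg n T k <= 2)%nat /\
    (deg n T k = 2%nat ->
       forall a b, a <> b -> adjacent n T k a -> adjacent n T k b ->
       pt_collinear (node_pos n z zBS T k) (node_pos n z zBS T a) (node_pos n z zBS T b)).
Proof.
  intros k Hk. destruct HT as [HF [Hdeg Hmin]].
  set (K := node_pos n z zBS T k). set (P := node_pos n z zBS T (par T k)).
  assert (HK : K = z k) by (apply pos_src; auto).
  assert (Hpk : (par T k <= n + nst T)%nat /\ par T k <> k) by (apply (HTpar n z zBS T HF); lia).
  assert (Hsingle : forall b, (b < n + nst T)%nat -> par T b = k ->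
    flow T b * (fst K - fst (node_pos n z zBS T b)) + flow T k * (fst K - fst P) = 0 /\
    flow T b * (snd K - snd (node_pos n z zBS T b)) + flow T k * (snd K - snd P) = 0).
  { intros b Hb Hpb.
    assert (H := key n z zBS T HF Hdeg k Hk (fun i => Nat.eqb i b)
       ltac:(intros i Hi; apply Nat.eqb_eq in Hi; subst; auto) b (Nat.eqb_refl b) Hmin).
    rewrite !(sumR_delta _ b (fun i => flow T i * (_ - _ (node_pos n z zBS T i)))) in H by auto.
    exact H. }
  unfold deg. destruct (Nat.ltb_spec k (n + nst T)); [|lia].
  split.
  - destruct (le_lt_dec (cntN (n + nst T) (fun j => Nat.eqb (par T j) k)) 1) as [Hc|Hc]; [lia|].
    exfalso. destruct (cnt_two _ _ Hc) as [a [b [Ha [Hb [Hab [Pa Pb]]]]]].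
    apply Nat.eqb_eq in Pa, Pb.
    destruct (Hsingle a Ha Pa) as [A1 A2]. destruct (Hsingle b Hb Pb) as [B1 B2].
    assert (Hkey := key n z zBS T HF Hdeg k Hk (fun i => orb (Nat.eqb i a) (Nat.eqb i b))
       ltac:(intros i Hi; apply Bool.orb_true_iff in Hi; destruct Hi as [Hi|Hi];
             apply Nat.eqb_eq in Hi; subst; auto) a (Bool.orb_true_intro _ _ (or_introl (Nat.eqb_refl a))) Hmin).
    rewrite !(sumR_delta2 _ a b (fun i => flow T i * (_ - _ (node_pos n z zBS T i)))) in Hkey by auto.
    destruct Hkey as [C1 C2]. fold K P in C1, C2.
    assert (Hfb : 0 < flow T b) by (apply (HTflow n z zBS T HF); auto).
    assert (X1 : fst K - fst (node_pos n z zBS T b) = 0).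
    { assert (HH : flow T b * (fst K - fst (node_pos n z zBS T b)) = 0) by lra.
      destruct (Rmult_integral _ _ HH); lra. }
    assert (X2 : snd K - snd (node_pos n z zBS T b) = 0).
    { assert (HH : flow T b * (snd K - snd (node_pos n z zBS T b)) = 0) by lra.
      destruct (Rmult_integral _ _ HH); lra. }
    apply (pos_distinct n z zBS T k b Hz HBS HF Hk ltac:(lia)).
    + intro; subst b. apply (proj2 Hpk). auto.
    + rewrite <- HK. rewrite (surjective_pairing (node_pos n z zBS T b)), (surjective_pairing K).
      f_equal; lra.
  - intros Hd a b Hab Ha Hb. unfold pt_collinear. fold K.
    assert (Hc : cntN (n + nst T) (fun j => Nat.eqb (par T j) k) = 1%nat) by lia.
    destruct Ha as [[_ Ha]|[Ha Pa]]; destruct Hb as [[_ Hb]|[Hb Pb]].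
    + congruence.
    + subst a. fold P. destruct (Hsingle b Hb Pb) as [E1 E2].
      apply (collin_aux (flow T b) (flow T k)); auto. apply (HTflow n z zBS T HF); auto.
    + subst b. fold P. destruct (Hsingle a Ha Pa) as [E1 E2].
      assert (Hcol := collin_aux (flow T a) (flow T k) _ _ _ _ _ _ ltac:(apply (HTflow n z zBS T HF); auto) E1 E2).
      lra.
    + exfalso. assert (2 <= cntN (n + nst T) (fun j => Nat.eqb (par T j) k))%nat; [|lia].
      apply (cnt_ge2 _ _ a b); auto; apply Nat.eqb_eq; auto.
Qed.
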